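(* Let $(S,\mu)$ be a complete positive measure space and let $X$ be a Banach space whose norm is Fréchet differentiable. A non-zero element $f\in L^1(\mu,X)$ is a smooth point of $L^1(\mu,X)$ if $f(s)\neq 0$ for $\mu$-almost every $s\in S$. Conversely, if in addition $\mu$ is $\sigma$-finite and a non-zero $f\in L^1(\mu,X)$ is a smooth point of $L^1(\mu,X)$, then $f(s)\neq 0$ for $\mu$-almost every $s\in S$.
   Context: $L^1(\mu,X)$ is the Lebesgue–Bochner space of (classes of a.e. equal) strongly measurable $f:S\to X$ with $\int_S\|f(s)\|\,d\mu(s)<\infty$, normed by $\|f\|=\int_S\|f(s)\|\,d\mu(s)$. For a non-zero $x$ in a normed space $Y$, a support map at $x$ is a norm-one bounded linear functional $F$ on $Y$ with $F(x)=\|x\|$; $x$ is smooth if the support map at $x$ is unique. The norm of $X$ is Fréchet differentiable if for every non-zero $x\in X$ there is $\varphi\in X^*$ with $\lim_{h\to0}\big|\|x+h\|-\|x\|-\varphi(h)\big|/\|h\|=0$. *)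

(* Defs.v *)
From HB Require Import structures.
From mathcomp Require Import all_boot all_order all_algebra.
From mathcomp Require Import all_classical all_reals all_analysis.
Set Implicit Arguments. Unset Strict Implicit. Unset Printing Implicit Defensive.
Import Order.TTheory GRing.Theory Num.Theory.
Import numFieldNormedType.Exports.
Local Open Scope classical_set_scope.
Local Open Scope ring_scope.

Definition frechet_diff_norm (R : realType) (X : normedModType R) : Prop :=
  forall x : X, x != 0 ->
    exists phi : X -> R,
      (forall (a : R) (u v : X), phi (a *: u + v) = a * phi u + phi v) /\
      continuous phi /\
      (fun h : X => (`|x + h| - `|x| - phi h) / `|h|) @ 0^' --> (0 : R).

Section Bochner.
Context (R : realType) (d : measure_display) (S : measurableType d)
  (X : normedModType R) (mu : {measure set S -> \bar R}).

Definition simple_fun (g : S -> X) : Prop :=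
  finite_set (range g) /\ forall x : X, measurable (g @^-1` [set x]).

Definition strongly_measurable (f : S -> X) : Prop :=
  exists g : nat -> S -> X, (forall n, simple_fun (g n)) /\
    {ae mu, forall s, (fun n => g n s) @ \oo --> f s}.

Definition L1norm (f : S -> X) : \bar R := (\int[mu]_s (`|f s|)%:E)%E.

Definition L1 (f : S -> X) : Prop :=
  strongly_measurable f /\ (L1norm f < +oo)%E.

Definition L1zero (f : S -> X) : Prop := {ae mu, forall s, f s = 0}.

(* A bounded linear functional on L^1(mu,X) is represented by a map
   F : (S -> X) -> R, linear on representatives, and bounded; boundedness
   forces F to vanish on null functions, so F is well defined on classes.
   Norm one: sup_{g <> 0} |F g| / ||g|| = 1, i.e. |F g| <= ||g|| for all g
   and for every e > 0 some g has |F g| > (1 - e) ||g||. *)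
Definition support_map (f : S -> X) (F : (S -> X) -> R) : Prop :=
  [/\ (forall (a : R) (g h : S -> X), L1 g -> L1 h ->
         F (fun s => a *: g s + h s) = a * F g + F h),
      (forall g, L1 g -> ((`|F g|)%:E <= L1norm g)%E),
      (forall e : R, 0 < e -> exists g, L1 g /\
         (((1 - e) * fine (L1norm g))%:E < (`|F g|)%:E)%E) &
      (F f)%:E = L1norm f].

Definition smooth_point (f : S -> X) : Prop :=
  (exists F, support_map f F) /\
  forall F G, support_map f F -> support_map f G ->
    forall g, L1 g -> F g = G g.

End Bochner.

(* Main.v *)
Require Import Defs.
From HB Require Import structures.
From mathcomp Require Import all_boot all_order all_algebra.
From mathcomp Require Import all_classical all_reals all_analysis.
From mathcomp Require Import lra ring measurable_realfun.
Import Order.TTheory GRing.Theory Num.Theory.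
Import numFieldNormedType.Exports.
Local Open Scope classical_set_scope.
Local Open Scope ring_scope.
Set Implicit Arguments. Unset Strict Implicit. Unset Printing Implicit Defensive.

Section Gateaux.
Context (R : realType) (X : normedModType R).

Definition dq (x y : X) (n : nat) : R :=
  n.+1%:R * (`|x + n.+1%:R^-1 *: y| - `|x|).

Lemma dq_bound x y n : `|dq x y n| <= `|y|.
Proof.
rewrite /dq normrM ger0_norm // -ler_pdivlMl ?ltr0Sn //.
apply: le_trans (ler_dist_dist _ _) _.
by rewrite addrAC subrr add0r normrZ ger0_norm ?invr_ge0 // mulrC.

Qed.

Lemma dq0 x n : dq x 0 n = 0.
Proof. by rewrite /dq scaler0 addr0 subrr mulr0. Qed.

Lemma dq_self x n : dq x x n = `|x|.
Proof.
rewrite /dq -{1}(scale1r x) -scalerDl normrZ ger0_norm; last first.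
  by rewrite addr_ge0 // invr_ge0.
by rewrite -{2}(mul1r `|x|) -mulrBl addrAC subrr add0r mulrA divff ?mul1r.
Qed.

Lemma dq_zero y n : dq 0 y n = `|y|.
Proof.
rewrite /dq add0r normr0 subr0 normrZ ger0_norm ?invr_ge0 //.
by rewrite mulrA divff ?mul1r.
Qed.


Lemma lin0 (phi : X -> R) :
  (forall (a : R) (u v : X), phi (a *: u + v) = a * phi u + phi v) ->
  phi 0 = 0.
Proof.
move=> lin; have := lin 1 0 0; rewrite scaler0 addr0 mul1r => h; lra.

Qed.

Lemma linZ (phi : X -> R) :
  (forall (a : R) (u v : X), phi (a *: u + v) = a * phi u + phi v) ->
  forall a u, phi (a *: u) = a * phi u.
Proof.
by move=> lin a u; have := lin a u 0; rewrite addr0 lin0 // addr0.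
Qed.

Lemma gateaux : frechet_diff_norm X -> forall x : X, x != 0 ->
  exists phi : X -> R,
    (forall (a : R) (u v : X), phi (a *: u + v) = a * phi u + phi v) /\
    forall y, dq x y @ \oo --> phi y.
Proof.
move=> fr x x0; have [phi [lin [_ cv]]] := fr x x0.
exists phi; split => // y.
have [->|y0] := eqVneq y 0.
  rewrite lin0 //; have -> : dq x 0 = fun _ => 0 by apply/funext => n; rewrite dq0.
  exact: cvg_cst.
pose h n : X := n.+1%:R^-1 *: y.
have hn0 n : h n != 0 by rewrite scaler_eq0 negb_or y0 andbT invr_eq0 pnatr_eq0.
have h0 : h @ \oo --> (0 : X).
  rewrite -(scale0r y); apply: cvgZr_tmp; exact: cvg_harmonic.
have h0' : h @ \oo --> (0 : X)^'.
  move=> P /= HP; have [N _ HN] := h0 _ HP; exists N => // n Nn; exact: HN _ Nn (hn0 n).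
pose F := fun h : X => (`|x + h| - `|x| - phi h) / `|h|.
have e0 := @cvg_comp _ _ _ h F _ _ _ h0' cv.
have -> : dq x y = fun n => (F \o h) n * `|y| + phi y.
  apply/funext => n; rewrite /F /h /= linZ // normrZ ger0_norm ?invr_ge0 //.
  rewrite /dq; have ny : `|y| != 0 by rewrite normr_eq0.
  by field; rewrite ny andbT addrC natr1 pnatr_eq0. 
rewrite -{2}(add0r (phi y)) -(mul0r `|y|).
apply: cvgD; last exact: cvg_cst.
exact: cvgMr_tmp.
Qed.


Definition Dd (x y : X) : R := lim (dq x y @ \oo).

Lemma Dd_cvg : frechet_diff_norm X -> forall x y, dq x y @ \oo --> Dd x y.
Proof.
move=> fr x y; have [->|x0] := eqVneq x 0.
  rewrite /Dd; have -> : dq 0 y = fun _ => `|y| by apply/funext => n; rewrite dq_zero.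
  apply: (cvgP `|y|); exact: cvg_cst.
have [phi [_ cv]] := gateaux fr x0.
by rewrite /Dd (cvg_lim _ (cv y)).
Qed.

Lemma Dd_lin : frechet_diff_norm X -> forall x, x != 0 ->
  forall (a : R) (u v : X), Dd x (a *: u + v) = a * Dd x u + Dd x v.
Proof.
move=> fr x x0 a u v; have [phi [lin cv]] := gateaux fr x0.
by rewrite /Dd !(cvg_lim _ (cv _)).
Qed.

Lemma Dd_bound : frechet_diff_norm X -> forall x y, `|Dd x y| <= `|y|.
Proof.
move=> fr x y; rewrite ler_norml; apply/andP; split.
  apply: limr_ge; first by apply/cvg_ex; eexists; exact: Dd_cvg.
  by apply: nearW => n; have := dq_bound x y n; rewrite ler_norml => /andP[].
apply: limr_le; first by apply/cvg_ex; eexists; exact: Dd_cvg.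
by apply: nearW => n; have := dq_bound x y n; rewrite ler_norml => /andP[].
Qed.

Lemma Dd0 x : Dd x 0 = 0.
Proof.
rewrite /Dd; have -> : dq x 0 = fun _ => 0 by apply/funext => n; rewrite dq0.
by apply: cvg_lim => //; apply: cvg_cst.
Qed.

Lemma Dd_self x : Dd x x = `|x|.
Proof.
rewrite /Dd; have -> : dq x x = fun _ => `|x| by apply/funext => n; rewrite dq_self.
by apply: cvg_lim => //; apply: cvg_cst.
Qed.

End Gateaux.
Section Meas.
Context (R : realType) (d : measure_display) (S : measurableType d)
  (mu : {measure set S -> \bar R}) (X : normedModType R).

Lemma simple_comp_meas (g : S -> X) (phi : X -> R) :
  simple_fun g -> measurable_fun setT (fun s => phi (g s)).
Proof.
move=> [fin mpre] _ B mB; rewrite setTI.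
have -> : (fun s => phi (g s)) @^-1` B =
    \bigcup_(y in range g `&` (phi @^-1` B)) g @^-1` [set y].
  apply/seteqP; split => [s Bs | s [y [[s' _ gs'] By] gsy]].
    by exists (g s) => //; split => //; exists s.
  by rewrite /preimage /= gsy.
apply: fin_bigcup_measurable; first exact: finite_setIl.
by move=> y _; exact: mpre.
Qed.

Lemma simple_comb (a : R) (g h : S -> X) :
  simple_fun g -> simple_fun h -> simple_fun (fun s => a *: g s + h s).
Proof.
move=> [fg mg] [fh mh]; split.
  apply: (@sub_finite_set _ _ ((fun p : X * X => a *: p.1 + p.2) @` (range g `*` range h))).
    by move=> _ [s _ <-]; exists (g s, h s) => //; split; exists s.
  by apply: finite_image; apply: finite_setX.
move=> x.
have -> : (fun s => a *: g s + h s) @^-1` [set x] =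
    \bigcup_(y in range g) (g @^-1` [set y] `&` h @^-1` [set x - a *: y]).
  apply/seteqP; split => [s /= <- | s [y _ [/= gsy hs]]].
    by exists (g s) => //; split => //=; rewrite addrAC subrr add0r.
  by rewrite /= gsy hs addrC subrK.
apply: fin_bigcup_measurable => // y _.
exact: measurableI.
Qed.

Lemma simple_ind (B : set S) (x0 : X) : measurable B ->
  simple_fun (fun s => if s \in B then x0 else 0).
Proof.
move=> mB; split.
  apply: (@sub_finite_set _ _ [set x0; 0]); last first.
    exact: finite_set2.
  by move=> _ [s _ <-]; case: ifP => _; [left|right].
move=> x.
have -> : (fun s => if s \in B then x0 else 0) @^-1` [set x] =
    (B `&` [set _ | x0 = x]) `|` (~` B `&` [set _ | 0 = x]).
  apply/seteqP; split => s /=.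
    case: ifPn => sB <-; [left; split => //; exact: set_mem|right; split => //; move: sB; by rewrite notin_setE].
  by case => -[sB e]; [rewrite mem_set|rewrite memNset].
have mc (P : Prop) : measurable [set _ : S | P].
  by have [p|np] := pselect P; [rewrite (_ : [set _ | P] = setT) ?predeqE|rewrite (_ : [set _ | P] = set0) ?predeqE].
by apply: measurableU; apply: measurableI => //; exact: measurableC.
Qed.


Lemma sm_simple (g : S -> X) : simple_fun g -> strongly_measurable mu g.
Proof.
move=> sg; exists (fun _ => g); split => //; apply: aeW => s; exact: cvg_cst.
Qed.

Lemma sm_comb (a : R) (g h : S -> X) :
  strongly_measurable mu g -> strongly_measurable mu h ->
  strongly_measurable mu (fun s => a *: g s + h s).
Proof.
move=> [G [sG cG]] [H [sH cH]].
exists (fun n s => a *: G n s + H n s); split.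
  by move=> n; exact: simple_comb.
apply: filterS2 cG cH => s cg ch.
apply: cvgD => //; apply: cvgZ => //; exact: cvg_cst.
Qed.

Hypothesis cmu : measure_is_complete mu.

Lemma sm_norm (u : S -> X) : strongly_measurable mu u ->
  measurable_fun setT (fun s => `|u s|).
Proof.
move=> [G [sG [N [mN N0 sN]]]].
pose v n s := \1_(~` N) s * `|G n s|.
pose w s := \1_(~` N) s * `|u s|.
have mw : measurable_fun setT w.
  apply: (@measurable_fun_cvg _ _ _ _ v) => [n|s _].
    apply: measurable_funM.
      by apply: measurable_indic; exact: measurableC.
    exact: (simple_comp_meas _ (sG n)).
  rewrite /v /w indicE; case: (boolP (s \in ~` N)) => sN'.
    apply: cvgMl_tmp; apply: cvg_norm.
    apply: contrapT => nP; move: sN'; rewrite inE => /(_ (sN s nP)); by [].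
  under eq_fun do rewrite mul0r.
  rewrite mul0r; exact: cvg_cst.
move=> _ Y mY; rewrite setTI.
have -> : (fun s => `|u s|) @^-1` Y = (w @^-1` Y `&` ~` N) `|` ((fun s => `|u s|) @^-1` Y `&` N).
  apply/seteqP; split => s /=.
    move=> Ys; have [Ns|Ns] := pselect (N s); first by right.
    by left; split => //; rewrite /w indicE mem_set // mul1r.
  case=> -[Ys Ns] //; move: Ys; by rewrite /w indicE mem_set // mul1r.
apply: measurableU.
  apply: measurableI; last exact: measurableC.
  by have := mw measurableT Y mY; rewrite setTI.
apply: cmu; exists N; split => //; exact: subIsetr.
Qed.

End Meas.
Section L1.
Context (R : realType) (d : measure_display) (S : measurableType d)
  (mu : {measure set S -> \bar R}) (X : normedModType R).
Hypothesis cmu : measure_is_complete mu.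

Lemma L1_int (g : S -> X) : L1 mu g ->
  mu.-integrable setT (fun s => (`|g s|)%:E).
Proof.
move=> [sg gfin]; apply/integrableP; split.
  exact/measurable_EFinP/(sm_norm cmu sg).
by under eq_integral do rewrite /= normr_id.
Qed.

Lemma L1_comb (a : R) (g h : S -> X) : L1 mu g -> L1 mu h ->
  L1 mu (fun s => a *: g s + h s).
Proof.
move=> Lg Lh; split; first by apply: sm_comb; [case: Lg|case: Lh].
have ig := L1_int Lg; have ih := L1_int Lh.
have i2 : mu.-integrable setT ((fun s => (`|a|%:E * (`|g s|)%:E)) \+ (fun s => (`|h s|)%:E))%E.
  by apply: integrableD => //; exact: integrableZl.
have i3 : mu.-integrable setT (fun s => (`|a *: g s + h s|)%:E).
  apply: le_integrable i2.
    by [].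
    by apply/measurable_EFinP; apply: (sm_norm cmu); apply: sm_comb; [case: Lg|case: Lh].
  move=> s _ /=; rewrite normr_id lee_fin ger0_norm; last first.
    by rewrite addr_ge0 // mulr_ge0.
  by rewrite (le_trans (ler_normD _ _)) // normrZ.
by move/integrableP : i3 => [_]; under eq_integral do rewrite /= normr_id.
Qed.

Lemma L1_zero : L1 mu (fun _ : S => (0 : X)).
Proof.
split.
  have -> : (fun _ : S => (0 : X)) = (fun s => if s \in set0 then 0 else 0).
    by apply/funext => s; case: ifP.
  by apply: sm_simple; exact: simple_ind.
rewrite /L1norm; under eq_integral do rewrite normr0.
by rewrite integral0.
Qed.

Lemma L1_neg (g : S -> X) : L1 mu g ->
  L1 mu (fun s => (-1) *: g s + (fun _ : S => (0 : X)) s).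
Proof. by move=> Lg; apply: L1_comb => //; exact: L1_zero. Qed.

Lemma lin_neg (F : (S -> X) -> R) :
  (forall (a : R) (g h : S -> X), L1 mu g -> L1 mu h ->
         F (fun s => a *: g s + h s) = a * F g + F h) ->
  forall g, L1 mu g -> F (fun s => (-1) *: g s + (fun _ : S => (0 : X)) s) = - F g.
Proof.
move=> lin g Lg.
have F0 : F (fun _ => 0) = 0.
  have := lin 1 _ _ L1_zero L1_zero.
  have -> : (fun s : S => 1 *: (fun _ : S => (0 : X)) s + (fun _ : S => (0 : X)) s) = (fun _ => 0).
    by apply/funext => s; rewrite scaler0 addr0.
  by move=> h; lra.
by rewrite lin //; [rewrite F0; lra|exact: L1_zero].
Qed.

Lemma L1norm_pos (f : S -> X) : L1 mu f -> ~ L1zero mu f -> 0 < fine (L1norm mu f).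
Proof.
move=> Lf nz; apply: fine_gt0; apply/andP; split; last by case: Lf.
rewrite lt_neqAle integral_ge0 ?andbT //; apply/eqP => h0.
apply: nz.
have mf : measurable_fun setT (fun s => (`|f s|)%:E).
  by apply/measurable_EFinP; apply: (sm_norm cmu); case: Lf.
have := (ae_eq_integral_abs mu measurableT mf).1.
rewrite /L1norm in h0.
have -> : (\int[mu]_x `|(`|f x|)%:E| = 0)%E.
  by rewrite h0; apply: eq_integral => s _ /=; rewrite normr_id.
move=> /(_ erefl); apply: filterS => s /(_ I) /= [].
by move/eqP; rewrite normr_eq0 => /eqP.
Qed.


Hypothesis fr : frechet_diff_norm X.

Definition E (k g : S -> X) (s : S) : R :=
  if k s == 0 then 0 else Dd (k s) (g s).

Definition T (k g : S -> X) : R := \int[mu]_s E k g s.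

Lemma meas_dq (k g : S -> X) n : strongly_measurable mu k ->
  strongly_measurable mu g ->
  measurable_fun setT (fun s => dq (k s) (g s) n).
Proof.
move=> sk sg; rewrite /dq; apply: measurable_funM; first exact: measurable_cst.
apply: measurable_funB; last exact: (sm_norm cmu sk).
have -> : (fun s => `|k s + n.+1%:R^-1 *: g s|) = (fun s => `|n.+1%:R^-1 *: g s + k s|).
  by apply/funext => s; rewrite addrC.
by apply: (sm_norm cmu); exact: sm_comb.
Qed.

Lemma meas_eq0 (k : S -> X) : strongly_measurable mu k ->
  measurable_fun setT (fun s => k s == 0).
Proof.
move=> sk; apply: (measurable_fun_bool true).
have -> : [set: S] `&` (fun s => k s == 0) @^-1` [set true] =
    [set: S] `&` (fun s => `|k s|) @^-1` [set 0].
  apply/seteqP; split => s /= [_ h]; split => //; first by apply/eqP; rewrite normr_eq0 h.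
  by move/eqP: h; rewrite normr_eq0.
exact: (sm_norm cmu sk) (measurable_set1 _).
Qed.

Lemma E_meas (k g : S -> X) : strongly_measurable mu k ->
  strongly_measurable mu g -> measurable_fun setT (E k g).
Proof.
move=> sk sg.
apply: (@measurable_fun_cvg _ _ _ _ (fun n s => if k s == 0 then 0 else dq (k s) (g s) n)).
  move=> n; apply: measurable_fun_ifT; first exact: meas_eq0.
    exact: measurable_cst.
  exact: meas_dq.
move=> s _; rewrite /E; case: ifP => _; first exact: cvg_cst.
exact: Dd_cvg.
Qed.

Lemma E_bound (k g : S -> X) s : `|E k g s| <= `|g s|.
Proof. by rewrite /E; case: ifP => _; [rewrite normr0|exact: Dd_bound]. Qed.

Lemma E_int (k g : S -> X) : strongly_measurable mu k -> L1 mu g ->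
  mu.-integrable setT (EFin \o E k g).
Proof.
move=> sk Lg; apply: le_integrable (L1_int Lg) => //.
  by apply/measurable_EFinP; apply: E_meas => //; case: Lg.
by move=> s _ /=; rewrite lee_fin normr_id E_bound.
Qed.

Lemma T_lin (k : S -> X) : strongly_measurable mu k ->
  forall (a : R) (g h : S -> X), L1 mu g -> L1 mu h ->
  T k (fun s => a *: g s + h s) = a * T k g + T k h.
Proof.
move=> sk a g h Lg Lh; rewrite /T.
rewrite (@eq_Rintegral _ _ _ mu _ (fun s => a * E k g s + E k h s)); last first.
  move=> s _; rewrite /E; case: ifPn => k0; first by rewrite mulr0 addr0.
  exact: Dd_lin.
rewrite RintegralD //; first by rewrite RintegralZl //; exact: E_int.
have -> : EFin \o (fun s => a * E k g s) = (fun s => a%:E * (EFin \o E k g) s)%E.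
  by apply/funext => s.
by apply: integrableZl => //; exact: E_int.
exact: E_int.
Qed.

Lemma T_bound (k g : S -> X) : strongly_measurable mu k -> L1 mu g ->
  ((`|T k g|)%:E <= L1norm mu g)%E.
Proof.
move=> sk Lg; rewrite /T EFin_normr_Rintegral //; last exact: E_int.
apply: le_trans (le_abse_integral _ _ _) _ => //.
  by apply/measurable_EFinP; apply: E_meas => //; case: Lg.
apply: ge0_le_integral => //.
- by apply/measurableT_comp => //; apply/measurable_EFinP; apply: E_meas => //; case: Lg.
- by apply/measurable_EFinP; apply: (sm_norm cmu); case: Lg.
- by move=> s _ /=; rewrite lee_fin E_bound.
Qed.

Lemma L1norm_fin (f : S -> X) : L1 mu f -> (fine (L1norm mu f))%:E = L1norm mu f.
Proof.
move=> [_ Lf]; rewrite fineK // ge0_fin_numE //; exact: integral_ge0.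
Qed.

Lemma T_self (k f : S -> X) : strongly_measurable mu k -> L1 mu f ->
  (forall s, f s = 0 \/ f s = k s) -> T k f = fine (L1norm mu f).
Proof.
move=> sk Lf hf; rewrite /T /Rintegral /L1norm; congr fine.
apply: eq_integral => s _; congr EFin; rewrite /E.
case: ifPn => [/eqP k0|k0]; case: (hf s) => ->; rewrite ?normr0 ?Dd0 ?Dd_self //.
by rewrite k0 normr0.
Qed.

Lemma T_support (k f : S -> X) : strongly_measurable mu k -> L1 mu f ->
  ~ L1zero mu f -> (forall s, f s = 0 \/ f s = k s) -> support_map mu f (T k).
Proof.
move=> sk Lf nz hf; split.
- by move=> a g h; exact: T_lin.
- by move=> g; exact: T_bound.
- move=> e e0; exists f; split => //.
  rewrite T_self // lte_fin; have := L1norm_pos Lf nz.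
  set p := fine _ => p0; rewrite ger0_norm ?ltW //.
  have : 0 < e * p by exact: mulr_gt0.
  lra.
- by rewrite T_self // L1norm_fin.
Qed.


Lemma T_upper (f : S -> X) (F : (S -> X) -> R) : L1 mu f ->
  {ae mu, forall s, f s != 0} -> support_map mu f F ->
  forall g, L1 mu g -> F g <= T f g.
Proof.
move=> Lf hae [Flin Fb _ Ff] g Lg.
have sf : strongly_measurable mu f by case: Lf.
have sg : strongly_measurable mu g by case: Lg.
have key n : ((F g)%:E <= \int[mu]_s (dq (f s) (g s) n)%:E)%E.
  pose c : R := n.+1%:R^-1.
  have Lu := L1_comb c Lg Lf.
  have Fu := Flin c g f Lg Lf.
  have Bu := Fb _ Lu.
  have idq : mu.-integrable setT (EFin \o (fun s => dq (f s) (g s) n)).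
    apply: le_integrable (L1_int Lg) => //.
      by apply/measurable_EFinP; exact: meas_dq.
    by move=> s _ /=; rewrite lee_fin normr_id dq_bound.
  have iu := L1_int Lu; have iff := L1_int Lf.
  have -> : (\int[mu]_s (dq (f s) (g s) n)%:E)%E =
      (n.+1%:R * (fine (L1norm mu (fun s => c *: g s + f s)) - fine (L1norm mu f)))%:E.
    rewrite -[LHS]fineK; last exact: integrable_fin_num.
    congr EFin.
    have -> : fine (\int[mu]_s (dq (f s) (g s) n)%:E)%E =
        \int[mu]_s (n.+1%:R * (`|c *: g s + f s| - `|f s|)).
      by rewrite /Rintegral; congr fine; apply: eq_integral => s _; rewrite /dq [f s + _]addrC.
    rewrite RintegralZl //; last first.
      have -> : EFin \o (fun s => `|c *: g s + f s| - `|f s|) = ((fun s => (`|c *: g s + f s|)%:E) \- (fun s => (`|f s|)%:E))%E.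
        by apply/funext => s /=; rewrite EFinB.
      exact: integrableB.
    by rewrite RintegralB.
  rewrite lee_fin.
  have Ffv : F f = fine (L1norm mu f) by rewrite -Ff.
  have Fuv : F (fun s => c *: g s + f s) <= fine (L1norm mu (fun s => c *: g s + f s)).
    by rewrite -lee_fin L1norm_fin // (le_trans _ Bu) // lee_fin ler_norm.
  rewrite Fu Ffv in Fuv.
  have -> : F g = n.+1%:R * (c * F g) by rewrite mulrA divff ?mul1r.
  by rewrite ler_wpM2l //; lra.
have ff : {ae mu, forall s, setT s -> (fun n => (dq (f s) (g s) n)%:E) @ \oo --> (E f g s)%:E}.
  apply: filterS hae => s fs0 _; rewrite /E (negbTE fs0).
  apply: cvg_EFin; first exact: nearW.
  exact: Dd_cvg.
have fg : {ae mu, forall s n, setT s -> (`|(dq (f s) (g s) n)%:E| <= (`|g s|)%:E)%E}.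
  by apply: aeW => s n _; rewrite abse_EFin lee_fin dq_bound.
have [_ _ cv] := @dominated_convergence _ _ _ mu setT measurableT
  (fun n s => (dq (f s) (g s) n)%:E) (fun s => (E f g s)%:E) (fun s => (`|g s|)%:E)
  (fun n => iffRL (measurable_EFinP _ _) (meas_dq n sf sg))
  (iffRL (measurable_EFinP _ _) (E_meas sf sg)) ff (L1_int Lg) fg.
have : ((F g)%:E <= \int[mu]_s (E f g s)%:E)%E.
  rewrite -(cvg_lim _ cv) //; apply: lime_ge; first by apply/cvg_ex; eexists; exact: cv.
  exact: nearW.
rewrite -[X in (_ <= X)%E]fineK ?lee_fin //.
by apply: integrable_fin_num => //; exact: E_int.
Qed.


Lemma T_eq (f : S -> X) (F : (S -> X) -> R) : L1 mu f ->
  {ae mu, forall s, f s != 0} -> support_map mu f F ->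
  forall g, L1 mu g -> F g = T f g.
Proof.
move=> Lf hae hF g Lg; apply/le_anti/andP; split; first exact: T_upper.
have sf : strongly_measurable mu f by case: Lf.
have := T_upper Lf hae hF (L1_neg Lg).
case: hF => Flin _ _ _.
by rewrite (lin_neg Flin Lg) (lin_neg (T_lin sf) Lg) lerN2.
Qed.

Lemma part1 (f : S -> X) : L1 mu f -> ~ L1zero mu f ->
  {ae mu, forall s, f s != 0} -> smooth_point mu f.
Proof.
move=> Lf nz hae; split.
  exists (T f); apply: T_support => //; first by case: Lf.
  by move=> s; right.
by move=> F G hF hG g Lg; rewrite (T_eq Lf hae hF Lg) (T_eq Lf hae hG Lg).
Qed.

Lemma part2 (f : S -> X) : sigma_finite setT mu -> L1 mu f -> ~ L1zero mu f ->
  smooth_point mu f -> {ae mu, forall s, f s != 0}.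
Proof.
move=> [Fs UF mF] Lf nz [_ uniq].
have sf : strongly_measurable mu f by case: Lf.
apply: contrapT => nae.
pose Z := (fun s => `|f s|) @^-1` [set 0].
have mZ : measurable Z.
  by have := sm_norm cmu sf measurableT (measurable_set1 0); rewrite setTI.
have [i mi] : exists i, (0 < mu (Z `&` Fs i))%E.
  apply: contrapT => hn; apply: nae.
  have [N [mN N0 sN]] : mu.-negligible (\bigcup_i (Z `&` Fs i)).
    apply: negligible_bigcup => i; exists (Z `&` Fs i); split => //.
      by apply: measurableI => //; case: (mF i).
    apply/eqP; rewrite eq_le measure_ge0 andbT leNgt; apply/negP => h.
    by apply: hn; exists i.
  exists N; split => // s /= hs; apply: sN.
  have Zs : Z s by rewrite /Z /preimage /=; apply/eqP; rewrite normr_eq0; apply/negPn/negP.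
  have : setT s by [].
  rewrite UF => -[j _ Fj]; exists j => //.
pose B := Z `&` Fs i.
have mB : measurable B by apply: measurableI => //; case: (mF i).
have Bfin : (mu B < +oo)%E.
  apply: le_lt_trans (mF i).2; apply: le_measure; rewrite ?inE //; first by case: (mF i).
  exact: subIsetr.
have [s0 fs0] : exists s0, f s0 != 0.
  apply: contrapT => h; apply: nz; apply: aeW => s.
  by apply/eqP; apply/negPn/negP => hs; apply: h; exists s.
have fB s : B s -> f s = 0.
  by move=> [Zs _]; apply/eqP; rewrite -normr_eq0; apply/eqP; exact: Zs.
pose g0 := fun s => if s \in B then f s0 else 0.
have sg0 : strongly_measurable mu g0 by apply: sm_simple; exact: simple_ind.
have Lg0 : L1 mu g0.
  split => //; rewrite /L1norm.
  have -> : (fun s => (`|g0 s|)%:E) = (fun s => (`|f s0|)%:E * (\1_B s)%:E)%E.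
    apply/funext => s; rewrite /g0 indicE; case: ifP => _.
      by rewrite -EFinM mulr1n mulr1.
    by rewrite normr0 -EFinM mulr0n mulr0.
  rewrite ge0_integralZl_EFin //; try (by move=> s _; rewrite lee_fin indicE ler0n);
    try (by apply/measurable_EFinP; exact: measurable_indic).
  by rewrite integral_indic // setIT lte_mul_pinfty.
pose k := fun s => 1 *: g0 s + f s.
have sk : strongly_measurable mu k by exact: sm_comb.
have hk s : f s = 0 \/ f s = k s.
  rewrite /k /g0 scale1r; case: ifPn => sB; first by left; apply: fB; exact: set_mem.
  by right; rewrite add0r.
have e := uniq _ _ (T_support sf Lf nz (fun s => or_intror erefl))
                   (T_support sk Lf nz hk) _ Lg0.
have T1 : T f g0 = 0.
  rewrite /T (@eq_Rintegral _ _ _ mu _ (fun _ => 0)); last first.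
    move=> s _; rewrite /E; case: ifPn => // fs.
    rewrite /g0; case: ifPn => sB; last by rewrite Dd0.
    by move: fs; rewrite fB ?eqxx //; exact: set_mem.
  by rewrite /Rintegral integral0.
have T2 : T k g0 = `|f s0| * fine (mu B).
  rewrite /T (@eq_Rintegral _ _ _ mu _ ((cst `|f s0|) \_ B)); last first.
    move=> s _; rewrite patchE /E /k /g0; case: (boolP (s \in B)) => sB.
      by rewrite (fB _ (set_mem sB)) addr0 scale1r (negbTE fs0) Dd_self.
    by rewrite scaler0 Dd0; case: ifP.
  by rewrite -Rintegral_mkcond Rintegral_cst.
move: e; rewrite T1 T2 => /esym/eqP; rewrite mulf_eq0 normr_eq0 (negbTE fs0) /=.
by apply/negP; rewrite gt_eqF // fine_gt0 // mi Bfin.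
Qed.

End L1.

Unset Implicit Arguments.

Theorem theorem3p1 (R : realType) (d : measure_display) (S : measurableType d)
  (mu : {measure set S -> \bar R}) (X : completeNormedModType R) :
  measure_is_complete mu ->
  frechet_diff_norm X ->
  (forall f : S -> X, L1 mu f -> ~ L1zero mu f ->
     {ae mu, forall s, f s != 0} -> smooth_point mu f) /\
  (sigma_finite setT mu ->
   forall f : S -> X, L1 mu f -> ~ L1zero mu f ->
     smooth_point mu f -> {ae mu, forall s, f s != 0}).
Proof.
move=> cmu fr; split.
  by move=> f Lf nz hae; apply: (part1 cmu fr).
by move=> sfin f Lf nz hs; apply: (part2 cmu fr).
Qed.
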